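(* Let $p\geq 7$ be a prime, $\zeta=e^{2\pi i/p}$, $w=(\zeta,\zeta^2,\dots,\zeta^p)\in\mathbb{C}^p$, and $\sigma\in S_p$. Let $a_1,\dots,a_p\in\mathbb{R}$, not all zero, and let $H=(a_1,\dots,a_p)^\perp$. Suppose $H$ contains both $\sigma w$ and $(ij)(kl)\sigma w$, where $i,j,k,l$ are distinct. Then either \[ \sigma^{-1}(i)+\sigma^{-1}(j)\equiv\sigma^{-1}(k)+\sigma^{-1}(l)\pmod p, \] or $a_i=a_j$ and $a_k=a_l$.
   Context: $S_p$ acts on $\mathbb{C}^p$ by permuting coordinates: the $j$-th coordinate of $\epsilon x$ is $x_{\epsilon^{-1}(j)}$. $H=(a_1,\dots,a_p)^\perp$ is $\{x\in\mathbb{C}^p:\sum_m a_mx_m=0\}$. *)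

(* Defs.v *)
From HB Require Import structures.
From mathcomp Require Import all_boot all_order all_algebra all_fingroup.
From mathcomp Require Import reals trigo.
From mathcomp Require Import complex.
Set Implicit Arguments. Unset Strict Implicit. Unset Printing Implicit Defensive.
Import Order.TTheory GRing.Theory Num.Theory.
Local Open Scope ring_scope.
Local Open Scope complex_scope.

(* Coordinates of C^p are indexed by 'I_p; index t : 'I_p stands for the
   paper's coordinate t+1 (so paper coordinates 1..p <-> 0..p-1). *)

Definition zeta (R : realType) (p : nat) : R[i] :=
  cos (2 * pi / p%:R) +i* sin (2 * pi / p%:R).

Definition wvec (R : realType) (p : nat) : 'I_p -> R[i] :=
  fun t => zeta R p ^+ (t.+1).

Definition permute (p : nat) (T : Type) (s : 'S_p) (x : 'I_p -> T) : 'I_p -> T :=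
  fun j => x ((s^-1)%g j).

Definition in_hyperplane (R : realType) (p : nat) (a : 'I_p -> R)
  (x : 'I_p -> R[i]) : Prop :=
  \sum_(m < p) (a m)%:C * x m = 0.

(* Main.v *)
Require Import Defs.
From HB Require Import structures.
From mathcomp Require Import all_boot all_order all_algebra all_fingroup.
From mathcomp Require Import reals trigo.
From mathcomp Require Import complex ring.
Import Order.TTheory GRing.Theory Num.Theory.
Local Open Scope ring_scope.
Local Open Scope complex_scope.
Lemma zetaX (R : realType) p n : zeta R p ^+ n =
  cos (n%:R * (2 * pi / p%:R)) +i* sin (n%:R * (2 * pi / p%:R)).
Proof.
elim: n => [|n IH]; first by rewrite expr0 mul0r cos0 sin0.
rewrite exprS IH /zeta; set th := (2 * pi / p%:R).
rewrite -natr1 mulrDl mul1r cosD sinD; apply/eqP; rewrite eq_complex /=.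
apply/andP; split; apply/eqP; ring.
Qed.

Lemma zeta_prim (R : realType) p : prime p -> (3 <= p)%N -> p.-primitive_root (zeta R p).
Proof.
move=> pp p3.
have p0 : (p%:R : R) != 0 by rewrite pnatr_eq0 -lt0n (leq_trans _ p3).
have z1 : zeta R p ^+ p = 1.
  rewrite zetaX mulrC divfK // mulrC mulr_natr.
  by rewrite cos2pi sin2pi.
have zn1 : zeta R p != 1.
  apply/negP => /eqP/(congr1 (@complex.Im R)) /=.
  have : (0:R) < sin (2 * pi / p%:R).
    apply: sin_gt0_pi; apply/andP; split.
      by rewrite divr_gt0 ?mulr_gt0 ?pi_gt0 // ltr0n (leq_trans _ p3).
    rewrite ltr_pdivrMr ?ltr0n ?(leq_trans _ p3) // [pi * _]mulrC ltr_pM2r ?pi_gt0 //.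
    by rewrite ltr_nat (leq_trans _ p3).
  by move=> h1 h2; move: h1; rewrite h2 ltxx.
have [d dprim dp] := prim_order_exists (prime_gt0 pp) z1.
case/primeP: pp => _ /(_ d dp) /orP[] /eqP dE.
  by move: (prim_expr_order dprim); rewrite dE expr1 => /eqP; rewrite (negbTE zn1).
by move: dprim; rewrite dE.
Qed.
Lemma zetaJ (R : realType) p : conjc (zeta R p) * zeta R p = 1.
Proof.
rewrite /zeta; set th := (2 * pi / p%:R); apply/eqP; rewrite eq_complex /=.
have := cos2Dsin2 th => e.
apply/andP; split; apply/eqP; last by ring.
by rewrite -e; ring.
Qed.

Lemma keyalg (F : fieldType) (al be A B Ac Bc xi xj xk xl : F) :
  al*A + be*B = 0 -> al*Ac+be*Bc = 0 -> Ac*(xi*xj) = -A -> Bc*(xk*xl) = -B ->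
  al*A*(xi*xj - xk*xl) = 0.
Proof.
move=> E Ec HA HB.
have eB : be*B = -(al*A) by apply/eqP; rewrite -subr_eq0 opprK addrC E.
have : (al*Ac+be*Bc)*(xi*xj*(xk*xl)) = 0 by rewrite Ec mul0r.
have -> : (al*Ac+be*Bc)*(xi*xj*(xk*xl)) =
   al*(Ac*(xi*xj))*(xk*xl) + (be*(Bc*(xk*xl)))*(xi*xj) by ring.
rewrite HA HB.
have -> : be * -B = -(be*B) by ring.
rewrite eB => <-; ring.
Qed.

Lemma conjR (R : realType) (r : R) : conjc (r%:C) = r%:C.
Proof. by apply/eqP; rewrite eq_complex /= oppr0 !eqxx. Qed.

Lemma conj_lin (R : realType) (r1 r2 r3 r4 : R) (u1 u2 u3 u4 : R[i]) :
  conjc ((r1%:C - r2%:C) * (u1 - u2) + (r3%:C - r4%:C)*(u3-u4)) =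
  (r1%:C - r2%:C) * (conjc u1 - conjc u2) + (r3%:C - r4%:C) * (conjc u3 - conjc u4).
Proof.
case: u1 u2 u3 u4 => [? ?] [? ?] [? ?] [? ?]; apply/eqP; rewrite eq_complex /=.
by apply/andP; split; apply/eqP; ring.
Qed.

Lemma E_alg (F: comRingType) (ai aj ak al xi xj xk xl : F):
  ai*(xj - xi) + (aj*(xi-xj) + (ak*(xl-xk) + al*(xk-xl))) = (ai-aj)*(xj-xi) + (ak-al)*(xl-xk).
Proof. by ring. Qed.

Lemma HA_alg (F: comRingType) (cj ci xj xi : F): cj*xj = 1 -> ci*xi = 1 -> (cj - ci)*(xi*xj) = -(xj - xi).
Proof.
move=> h1 h2; transitivity ((cj*xj)*xi - (ci*xi)*xj); first by ring.
by rewrite h1 h2 !mul1r opprB.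
Qed.

Lemma modSS (p a b c d : nat) : (a.+1 + b.+1 == c.+1 + d.+1 %[mod p])%N = (a + b == c + d %[mod p])%N.
Proof. by rewrite !addSn !addnS -(addn2 (a+b)) -(addn2 (c+d)) eqn_modDr. Qed.

Arguments HA_alg {F cj ci xj xi}.
Arguments keyalg {F al be A B Ac Bc xi xj xk xl}.

Theorem lemma4p7 (R : realType) (p : nat) (hp : prime p) (hp7 : (7 <= p)%N)
  (sigma : 'S_p) (a : 'I_p -> R) (ha : exists m, a m != 0)
  (i j k l : 'I_p) (hdist : uniq [:: i; j; k; l])
  (hsig : in_hyperplane a (permute sigma (@wvec R p)))
  (htau : in_hyperplane a
            (permute (tperm i j * tperm k l)%g (permute sigma (@wvec R p)))) :
  (nat_of_ord ((sigma^-1)%g i) + nat_of_ord ((sigma^-1)%g j)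
     = nat_of_ord ((sigma^-1)%g k) + nat_of_ord ((sigma^-1)%g l) %[mod p])%N
  \/ (a i = a j /\ a k = a l).
Proof.
set z := zeta R p.
have zp : p.-primitive_root z := @zeta_prim R p hp (@leq_trans 7 3 p erefl hp7).
set x := fun m : 'I_p => z ^+ ((sigma^-1)%g m).+1.
have hs : \sum_(m < p) (a m)%:C * x m = 0 := hsig.
have ht : \sum_(m < p) (a m)%:C * x (tperm i j (tperm k l m)) = 0.
  move: htau; rewrite /in_hyperplane /permute /wvec invMg !tpermV => h; rewrite -[X in _ = X]h.
  by apply: eq_bigr => m _; rewrite permM.
move: hdist; rewrite /= !inE !negb_or => /and4P[/and3P[hij hik hil] /andP[hjk hjl] hkl _].
have hji := hij; rewrite eq_sym in hji.
have hki := hik; rewrite eq_sym in hki.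
have hli := hil; rewrite eq_sym in hli.
have hkj := hjk; rewrite eq_sym in hkj.
have hlj := hjl; rewrite eq_sym in hlj.
have hlk := hkl; rewrite eq_sym in hlk.
have ti : tperm i j (tperm k l i) = j by rewrite (tpermD hki hli) tpermL.
have tj : tperm i j (tperm k l j) = i by rewrite (tpermD hkj hlj) tpermR.
have tk : tperm i j (tperm k l k) = l by rewrite tpermL (tpermD hil hjl).
have tl : tperm i j (tperm k l l) = k by rewrite tpermR (tpermD hik hjk).
have E0 : \sum_(m < p) (a m)%:C * (x (tperm i j (tperm k l m)) - x m) = 0.
  transitivity (\sum_(m < p) (a m)%:C * x (tperm i j (tperm k l m)) - \sum_(m < p) (a m)%:C * x m); last by rewrite ht hs subr0.
  by rewrite -sumrB; apply: eq_bigr => m _; rewrite mulrBr.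
rewrite (bigD1 i) //= (bigD1 j) //= (bigD1 k) //= ?hki ?hkj //= (bigD1 l) //= ?hli ?hlj ?hlk //= in E0.
rewrite ti tj tk tl big1 ?addr0 in E0; last first.
  move=> m /andP[/andP[/andP[mi mj] mk] ml].
  rewrite eq_sym in mi; rewrite eq_sym in mj; rewrite eq_sym in mk; rewrite eq_sym in ml.
  by rewrite (tpermD mk ml) (tpermD mi mj) subrr mulr0.
set al := (a i)%:C - (a j)%:C.
set be := (a k)%:C - (a l)%:C.
have E : al * (x j - x i) + be * (x l - x k) = 0 by rewrite /al /be -E_alg.
have xJ m : conjc (x m) * x m = 1.
  by rewrite /x rmorphXn -exprMn zetaJ expr1n.
have Ec : al * (conjc (x j) - conjc (x i)) + be * (conjc (x l) - conjc (x k)) = 0.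
  transitivity (conjc (al*(x j - x i) + be*(x l - x k))); first by rewrite /al /be conj_lin.
  by rewrite E conjc0.
have xinj m n : x m = x n -> m = n.
  move=> /eqP; rewrite /x (eq_prim_root_expr zp) -(addn1 (sigma^-1%g m)) -(addn1 (sigma^-1%g n)) eqn_modDr !modn_small //.
  by move=> /eqP/val_inj/perm_inj.
have HA := HA_alg (xJ j) (xJ i).
have HB := HA_alg (xJ l) (xJ k).
have key := keyalg E Ec HA HB.
case: (eqVneq (a i) (a j)) => [aij | aij].
  right; split => //.
  have : be * (x l - x k) = 0 by rewrite -E /al aij subrr mul0r add0r.
  move/eqP; rewrite mulf_eq0 => /orP[].
    by rewrite /be subr_eq0 => /eqP [].
  by rewrite subr_eq0 => /eqP /xinj /eqP; rewrite (negbTE hlk).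
left.
have al0 : al != 0.
  by rewrite /al subr_eq0; apply/negP => /eqP [] /eqP; rewrite (negbTE aij).
have A0 : x j - x i != 0.
  by rewrite subr_eq0; apply/negP => /eqP /xinj /eqP; rewrite (negbTE hji).
move/eqP: key; rewrite !mulf_eq0 (negbTE al0) (negbTE A0) /= subr_eq0.
rewrite /x -!exprD (eq_prim_root_expr zp) modSS.
by move/eqP.
Qed.
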